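(* Let $\mathcal G$ be a Lie superalgebra over a field of characteristic zero, let $\mathcal S$ be the space of symmetric operators on $\mathcal G$ and $[\cdot,\cdot]$ the extended bracket described below, and let $1$ denote the identity map of $\mathcal G$. If $A\in\mathcal S$, then for every integer $k\ge1$ the element $[A,k]=[\cdots[[A,1],1],\ldots,1]$ (with $1$ appearing $k$ times) also lies in $\mathcal S$.
   Context: Set $\mathcal U_1=\mathcal G$ with its $\mathbb Z_2$-grading. For $p\ge1$ define recursively $\mathcal U_{-p+1}=\mathrm{Hom}(\mathcal U_1,\mathcal U_{-p+2})$, $\mathbb Z_2$-graded by declaring $A$ even (resp. odd) if it preserves (resp. reverses) parity; $|u|$ is the parity of a homogeneous element. Elements of $\mathcal U_{1-p}$ are operators of order $p$ (elements of $\mathcal G$ have order $0$), identified for $p\ge1$ with $p$-linear maps $A(x_1,\dots,x_p)=A(x_1)\cdots(x_p)$; $\mathcal U_{1-}=\bigoplus_{p\ge0}\mathcal U_{1-p}$. The identity map $1$ is an even operator of order $1$. An operator of order $p\ge2$ is symmetric if $A(\dots,x_i,x_{i+1},\dots)=(-1)^{|x_i||x_{i+1}|}A(\dots,x_{i+1},x_i,\dots)$ for all homogeneous arguments and all $i$; operators of order $0$ or $1$ are symmetric; $\mathcal S$ is the span of symmetric operators. Define $\circ$: $A\circ y=A(y)$, $y\circ A=0$ for $A$ of order $\ge1$, $y\in\mathcal U_1$; for $A,B$ of orders $\ge1$, recursively $(A\circ B)(x)=A\circ B(x)+(-1)^{|B||x|}A(x)\circ B$. Define $\bullet$: $A_p\bullet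 B_q=\frac{p!q!}{(p+q-1)!}A_p\circ B_q$ for orders $p,q\ge1$; $A_p\bullet x=pA_p(x)$, $x\bullet A_p=0$, $x\bullet y=0$ for $x,y\in\mathcal U_1$. The bracket of $\mathcal G$ extends to $\mathcal U_{1-}$: on $\mathcal G$ it is the given bracket, and for operators $A,B$ of orders $p,q$ with $p+q\ge1$, $[A,B]$ is the operator of order $p+q$ defined recursively by $[A,B]\bullet x=[A,B\bullet x]+(-1)^{|x||B|}[A\bullet x,B]$ for all $x\in\mathcal G$. *)

(* Defs.v *)
From HB Require Import structures.
From mathcomp Require Import all_boot all_order all_algebra.
Set Implicit Arguments. Unset Strict Implicit. Unset Printing Implicit Defensive.
Import Order.TTheory GRing.Theory Num.Theory.
Local Open Scope ring_scope.

Section LieSuper.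
Variables (K : fieldType) (G0 G1 : lmodType K).

(* The Z2-graded vector space G = G0 (+) G1 (even part, odd part). *)
Notation G := (G0 * G1)%type.

Definition pr (a : bool) (x : G) : G := if a then (0, x.2) else (x.1, 0).

Definition homog (a : bool) (x : G) : Prop := pr a x = x.

Definition lie_superalgebra (br : G -> G -> G) : Prop :=
  [/\ (forall (c : K) x x' y, br (c *: x + x') y = c *: br x y + br x' y),
      (forall (c : K) x y y', br x (c *: y + y') = c *: br x y + br x y'),
      (forall a b x y, homog a x -> homog b y -> homog (a (+) b) (br x y)),
      (forall a b x y, homog a x -> homog b y ->
          br x y = - ((-1) ^+ (a && b) *: br y x)) &
      (forall a b c x y z, homog a x -> homog b y -> homog c z ->
          br x (br y z) = br (br x y) z + (-1) ^+ (a && b) *: br y (br x z))].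

(* Operators: an operator of order p is represented by a function on lists of
   arguments; only its values on lists of length p are meaningful.
   A(x1,...,xp) = A(x1)...(xp); an element y of G is the order-0 operator
   (fun _ => y). *)
Definition op := seq G -> G.

Definition opapp (A : op) (x : G) : op := fun s => A (x :: s).

Definition multilinear (p : nat) (A : op) : Prop :=
  forall (l r : seq G), (size l + size r).+1 = p ->
  forall (c : K) x y,
    A (l ++ (c *: x + y) :: r) = c *: A (l ++ x :: r) + A (l ++ y :: r).

Definition symmetric (p : nat) (A : op) : Prop :=
  multilinear p A /\
  forall (l r : seq G) (x y : G) (a b : bool),
    (size l + size r).+2 = p ->
    (forall z, z \in l ++ r -> exists e, homog e z) ->
    homog a x -> homog b y ->
    A (l ++ x :: y :: r) = (-1) ^+ (a && b) *: A (l ++ y :: x :: r).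

(* Parity component of parity b of an operator, following the recursive
   grading of U_{1-p} = Hom(U_1, U_{2-p}):
   A_b(x) = sum_a (A(pr a x))_{a+b}. *)
Fixpoint opPart (s : seq G) (b : bool) (A : op) {struct s} : G :=
  match s with
  | [::] => pr b (A [::])
  | x :: s' => \sum_(a : bool) opPart s' (a (+) b) (opapp A (pr a x))
  end.

Definition dot (p : nat) (A : op) (x : G) : op := fun s => p%:R *: A (x :: s).

(* Extended bracket, with fuel n = p + q:
   [A,B] . x = [A, B . x] + (-1)^{|x||B|} [A . x, B], with [A,B] . x =
   (p+q) [A,B](x), x and B decomposed into homogeneous components,
   and y . z = 0, y . A = 0 for y in G (so the terms vanish for q = 0,
   resp. p = 0). *)
Fixpoint xbr (br : G -> G -> G) (n p q : nat) (A B : op) {struct n} : op :=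
  match n with
  | 0 => fun _ => br (A [::]) (B [::])
  | n'.+1 => fun s =>
    match s with
    | [::] => 0
    | x :: s' =>
      (n%:R)^-1 *: \sum_(a : bool)
        ((if q is q'.+1 then xbr br n' p q' A (dot q B (pr a x)) s' else 0)
         + \sum_(b : bool)
             (if p is p'.+1 then
                (-1) ^+ (a && b) *:
                  xbr br n' p' q (dot p A (pr a x)) (fun t => opPart t b B) s'
              else 0))
    end
  end.

Definition bracket (br : G -> G -> G) (p q : nat) (A B : op) : op :=
  xbr br (p + q) p q A B.

Definition idop : op := fun s => if s is x :: _ then x else 0.

(* Elements of U_{1-} = (+)_p U_{1-p} are families F with F p of order p.
   [F, 1] by bilinearity: its order-(m+1) component is [F m, 1]. *)
Definition bracket1 (br : G -> G -> G) (F : nat -> op) : nat -> op :=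
  fun m => if m is m'.+1 then bracket br m' 1 (F m') idop else (fun _ => 0).

Definition bracketk (br : G -> G -> G) (k : nat) (F : nat -> op) : nat -> op :=
  iter k (bracket1 br) F.

(* F lies in S, the span of symmetric operators: F is a finite sum of
   symmetric operators B i of orders ord i. *)
Definition inS (F : nat -> op) : Prop :=
  exists (N : nat) (ord : 'I_N -> nat) (B : 'I_N -> op),
    (forall i, symmetric (ord i) (B i)) /\
    forall (p : nat) (l : seq G), size l = p ->
      F p l = \sum_(i < N | ord i == p) B i l.

End LieSuper.

(* Main.v *)
Require Import Defs.
From HB Require Import structures.
From mathcomp Require Import all_boot all_order all_algebra.
From Stdlib Require Import FunctionalExtensionality.
From mathcomp Require Import ring.
Import GRing.Theory.
Local Open Scope ring_scope.
Set Implicit Arguments. Unset Strict Implicit.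

Section Work.
Variables (K : fieldType) (G0 G1 : lmodType K).
Variable br : (G0 * G1)%type -> (G0 * G1)%type -> (G0 * G1)%type.
Hypothesis Hbr : lie_superalgebra br.
Hypothesis Hch : [pchar K] =i pred0.

Local Notation G := (G0 * G1)%type.
Local Notation op := (op G0 G1).
Local Notation idop := (@idop K G0 G1).
Local Notation sym := (@Defs.symmetric K G0 G1).

Lemma natn0 n : (n.+1%:R : K) != 0.
Proof. by move/pcharf0P: Hch => ->. Qed.

Lemma prD a c (u v : G) : pr a (c *: u + v) = c *: pr a u + pr a v.
Proof. by case: a; case: u => u1 u2; case: v => v1 v2; rewrite /pr /=;
  congr pair; rewrite /= ?scaler0 ?addr0. Qed.

Lemma pr0 a : pr a (0 : G) = 0.
Proof. by case: a. Qed.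

Lemma prS (x : G) : pr false x + pr true x = x.
Proof. by case: x => x1 x2; rewrite /pr /=; congr pair; rewrite /= ?addr0 ?add0r. Qed.

Lemma pr_pr a b (x : G) : pr a (pr b x) = if a == b then pr a x else 0.
Proof. by case: a; case: b. Qed.

Lemma homog_other a (x : G) : homog a x -> pr (~~ a) x = 0.
Proof. by rewrite /homog => <-; rewrite pr_pr; case: a. Qed.

Definition lin (f : op -> G) := forall c A1 A2,
  f (fun t => c *: A1 t + A2 t) = c *: f A1 + f A2.

Lemma lin_zero f : lin f -> f (fun _ => 0) = 0.
Proof.
move=> H; have E : (fun _ : seq G => 0 : G) = (fun t => 1 *: (fun _ => 0) t + (fun _ => 0) t).
  by apply: functional_extensionality => t; rewrite scaler0 addr0.
have := H 1 (fun _ => 0) (fun _ => 0); rewrite -E scale1r => E2.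
by apply: (addrI (f (fun _ => 0))); rewrite addr0 -E2.
Qed.

Lemma lin_scale f c A : lin f -> f (fun t => c *: A t) = c *: f A.
Proof.
move=> H; have E : (fun t => c *: A t) = (fun t => c *: A t + (fun _ => 0) t).
  by apply: functional_extensionality => t; rewrite addr0.
by rewrite E H lin_zero // addr0.
Qed.

Lemma lin_add f A1 A2 : lin f -> f (fun t => A1 t + A2 t) = f A1 + f A2.
Proof.
move=> H; have E : (fun t => A1 t + A2 t) = (fun t => 1 *: A1 t + A2 t).
  by apply: functional_extensionality => t; rewrite scale1r.
by rewrite E H scale1r.
Qed.

Lemma lin0 : lin (fun _ => 0).
Proof. by move=> *; rewrite scaler0 addr0. Qed.

Lemma linD f g : lin f -> lin g -> lin (fun A => f A + g A).
Proof. by move=> Hf Hg c A1 A2; rewrite Hf Hg scalerDr addrACA. Qed.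

Lemma linZ k f : lin f -> lin (fun A => k *: f A).
Proof. by move=> Hf c A1 A2; rewrite Hf scalerDr !scalerA mulrC. Qed.

Lemma linS (I : finType) (F : I -> op -> G) :
  (forall i, lin (F i)) -> lin (fun A => \sum_i F i A).
Proof.
move=> H c A1 A2; rewrite scaler_sumr -big_split /=.
by apply: eq_bigr => i _; rewrite H.
Qed.

Lemma linC f (g : op -> op) : lin f ->
  (forall c A1 A2, g (fun t => c *: A1 t + A2 t) = (fun t => c *: g A1 t + g A2 t)) ->
  lin (fun A => f (g A)).
Proof. by move=> Hf Hg c A1 A2; rewrite Hg Hf. Qed.

Lemma lin_sum f (I : Type) (r : seq I) (P : pred I) (F : I -> op) : lin f ->
  f (fun t => \sum_(i <- r | P i) F i t) = \sum_(i <- r | P i) f (F i).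
Proof.
move=> H; elim: r => [|i r IH].
  have -> : (fun t => \sum_(i <- [::] | P i) F i t) = (fun _ => 0).
    by apply: functional_extensionality => t; rewrite big_nil.
  by rewrite big_nil lin_zero.
have E : (fun t => \sum_(j <- i :: r | P j) F j t) =
          (fun t => (if P i then F i t else 0) + \sum_(j <- r | P j) F j t).
  by apply: functional_extensionality => t; rewrite big_cons; case: (P i); rewrite ?add0r.
rewrite E big_cons; case: (P i).
  by rewrite lin_add // IH.
have -> : (fun t => 0 + \sum_(j <- r | P j) F j t) = (fun t => \sum_(j <- r | P j) F j t).
  by apply: functional_extensionality => t; rewrite add0r.
by [].
Qed.

Lemma dot_lin p y : forall c (A1 A2 : op),
  dot p (fun t => c *: A1 t + A2 t) y = (fun t => c *: dot p A1 y t + dot p A2 y t).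
Proof.
by move=> c A1 A2; apply: functional_extensionality => t; rewrite /dot scalerDr !scalerA mulrC.
Qed.

Lemma xbr_linA n : forall p q B s, lin (fun A => xbr br n p q A B s).
Proof.
elim: n => [|n IH] p q B s.
  by move=> c A1 A2 /=; case: Hbr => H1 _ _ _ _; exact: H1.
case: s => [|x s] /=; first by move=> c A1 A2; rewrite scaler0 addr0.
apply: linZ; apply: linS => a; apply: linD.
  by case: q => [|q]; [exact: lin0 | exact: IH].
apply: linS => b; case: p => [|p]; first exact: lin0.
apply: linZ; apply: (linC (f := fun A => xbr br n p q A _ s)); first exact: IH.
exact: dot_lin.
Qed.

Lemma opPart_lin t : forall b, lin (fun B => opPart t b B).
Proof.
elim: t => [|x t IH] b /=.
  by move=> c A1 A2; rewrite prD.
apply: linS => a; apply: (linC (f := fun B => opPart t _ B)); first exact: IH.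
by [].
Qed.

Lemma xbr_linB n : forall p q A s, lin (fun B => xbr br n p q A B s).
Proof.
elim: n => [|n IH] p q A s.
  by move=> c A1 A2 /=; case: Hbr => _ H2 _ _ _; exact: H2.
case: s => [|x s] /=; first by move=> c A1 A2; rewrite scaler0 addr0.
apply: linZ; apply: linS => a; apply: linD.
  case: q => [|q]; first exact: lin0.
  apply: (linC (f := fun B => xbr br n p q A B s)); first exact: IH.
  exact: dot_lin.
apply: linS => b; case: p => [|p]; first exact: lin0.
apply: linZ; apply: (linC (f := fun B => xbr br n p q _ B s)); first exact: IH.
move=> c A1 A2; apply: functional_extensionality => t.
by rewrite (opPart_lin t b c A1 A2).
Qed.

Definition eqon k (F F' : op) := forall t, size t = k -> F t = F' t.

Lemma opPart_ext t : forall b (B B' : op),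
  (forall u, size u = size t -> B u = B' u) -> opPart t b B = opPart t b B'.
Proof.
elim: t => [|x t IH] b B B' H /=; first by rewrite H.
apply: eq_bigr => a _; apply: IH => u Hu; apply: H => /=; by rewrite Hu.
Qed.

Lemma xbr_ext n : forall p q A A' B B' s, n = (p + q)%N -> size s = n ->
  eqon p A A' -> eqon q B B' -> xbr br n p q A B s = xbr br n p q A' B' s.
Proof.
elim: n => [|n IH] p q A A' B B' s Hn Hs HA HB.
  case: p q Hn HA HB => [|p] [|q] //= _ HA HB; by rewrite HA // HB.
case: s Hs => [|x s] //= [Hs].
congr (_ *: _); apply: eq_bigr => a _; congr (_ + _).
  case: q Hn HB => [|q] // Hn HB; apply: IH => //.
    by move: Hn; rewrite addnS => -[].
  by move=> t Ht; rewrite /dot HB //= Ht.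
apply: eq_bigr => b _; case: p Hn HA => [|p] // Hn HA; congr (_ *: _); apply: IH => //.
    by move: Hn; rewrite addSn => -[].
  by move=> t Ht; rewrite /dot HA //= Ht.
by move=> t Ht; apply: opPart_ext => u Hu; apply: HB; rewrite Hu Ht.
Qed.

Lemma sum_bool (F : bool -> G) : \sum_(a : bool) F a = F false + F true.
Proof. by rewrite big_bool /= addrC. Qed.

Definition R p A (y : G) s := xbr br p p 0 A (fun _ => y) s.
Definition T p A s := xbr br p.+1 p 1 A idop s.

Lemma ml_zero p (A : op) l r : multilinear p A -> (size l + size r).+1 = p ->
  A (l ++ 0 :: r) = 0.
Proof.
move=> H Hs; have := H l r Hs 1 0 0; rewrite scaler0 addr0 scale1r => E.
by apply: (addrI (A (l ++ 0 :: r))); rewrite addr0 -{1}E.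
Qed.

Lemma R_S p A y x s : size s = p ->
  R p.+1 A y (x :: s) =
  \sum_(a : bool) \sum_(b : bool) (-1) ^+ (a && b) *: R p (opapp A (pr a x)) (pr b y) s.
Proof.
move=> Hs; rewrite /R /= scaler_sumr; apply: eq_bigr => a _.
rewrite add0r scaler_sumr; apply: eq_bigr => b _.
rewrite (@xbr_ext p p 0 _ (dot p.+1 A (pr a x)) _ (fun _ => pr b y)) ?addn0 //; last by case.
change (dot p.+1 A (pr a x)) with (fun t => p.+1%:R *: opapp A (pr a x) t).
rewrite (@lin_scale (fun A => xbr br p p 0 A (fun _ => pr b y) s)); last exact: xbr_linA.
by rewrite !scalerA mulrAC mulVf ?natn0 // mul1r.
Qed.

Lemma opPart_id1 b (y : G) : opPart [:: y] b idop = if b then 0 else y.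
Proof.
rewrite /= big_bool /= /opapp /=.
by case: b; case: y => y1 y2; apply: injective_projections; rewrite /= ?addr0 ?add0r.
Qed.

Lemma T_S p A x s : multilinear p A -> size s = p ->
  T p A (x :: s) = p.+1%:R^-1 *: (R p A x s +
     (if p is p'.+1 then p%:R *: T p' (opapp A x) s else 0)).
Proof.
move=> HA Hs; rewrite /T /=; congr (_ *: _); rewrite big_split /=; congr (_ + _).
  have E : forall z, dot 1 idop z = fun _ => z.
    by move=> z; apply: functional_extensionality => t; rewrite /dot /= scale1r.
  under eq_bigr => a _ do rewrite E.
  rewrite sum_bool /R.
  have -> : (fun _ : seq G => x) = (fun t => 1 *: (fun _ => pr false x) t + (fun _ => pr true x) t).
    by apply: functional_extensionality => t; rewrite scale1r prS.
  by rewrite (xbr_linB p p 0 A s) scale1r.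
case: p HA Hs => [|p] HA Hs.
  by rewrite big1 // => a _; rewrite big1.
have E : forall a, \sum_(b : bool) (-1) ^+ (a && b) *:
    xbr br p.+1 p 1 (dot p.+1 A (pr a x)) (fun t => opPart t b idop) s
    = p.+1%:R *: T p (opapp A (pr a x)) s.
  move=> a; rewrite sum_bool andbF expr0 scale1r.
  rewrite (@xbr_ext p.+1 p 1 _ (dot p.+1 A (pr a x)) (fun t => opPart t false idop) idop) ?addn1 //; last first.
    by case=> [|z [|]] // _; exact: (opPart_id1 _ z).
  rewrite (@xbr_ext p.+1 p 1 _ (dot p.+1 A (pr a x)) (fun t => opPart t true idop) (fun _ => 0)) ?addn1 //; last first.
    by case=> [|z [|]] // _; exact: (opPart_id1 _ z).
  rewrite (@lin_zero (fun B => xbr br p.+1 p 1 (dot p.+1 A (pr a x)) B s)); last exact: xbr_linB.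
  rewrite scaler0 addr0.
  change (dot p.+1 A (pr a x)) with (fun t => p.+1%:R *: opapp A (pr a x) t).
  by rewrite (@lin_scale (fun A => xbr br p.+1 p 1 A idop s)) //; exact: xbr_linA.
under eq_bigr => a _ do rewrite E.
rewrite -scaler_sumr sum_bool; congr (_ *: _).
rewrite /T -(@lin_add (fun A => xbr br p.+1 p 1 A idop s)); last exact: xbr_linA.
apply: xbr_ext; rewrite ?addn1 //.
move=> t Ht; rewrite /opapp.
have H1 : (size (@nil G) + size t).+1 = p.+1 by rewrite /= Ht.
have := HA [::] t H1 (GRing.one K) (pr false x) (pr true x).
by rewrite !cat0s !scale1r prS.
Qed.

Lemma ml_opapp p (A : op) z : multilinear p.+1 A -> multilinear p (opapp A z).
Proof.
move=> H l r Hs c x y; rewrite /opapp -!cat_cons; apply: H.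
by rewrite /= -Hs.
Qed.

Lemma sum2_lin (s : bool -> bool -> K) (F1 F2 : bool -> bool -> G) c :
  \sum_(a : bool) \sum_(b : bool) s a b *: (c *: F1 a b + F2 a b) =
  c *: (\sum_(a : bool) \sum_(b : bool) s a b *: F1 a b) +
  \sum_(a : bool) \sum_(b : bool) s a b *: F2 a b.
Proof.
rewrite scaler_sumr -big_split; apply: eq_bigr => a _.
rewrite scaler_sumr -big_split; apply: eq_bigr => b _.
by rewrite scalerDr !scalerA mulrC.
Qed.

Lemma comb2 k m c (U V U' V' : G) :
  k *: ((c *: U + V) + m *: (c *: U' + V')) =
  c *: (k *: (U + m *: U')) + k *: (V + m *: V').
Proof.
have E2 : c * k * m = k * m * c by rewrite -mulrA mulrC.
have E1 : c * k = k * c := mulrC _ _.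
rewrite !scalerDr !scalerA E2 E1; exact: addrACA.
Qed.

Lemma comb1 k c (U V : G) :
  k *: ((c *: U + V) + 0) = c *: (k *: (U + 0)) + k *: (V + 0).
Proof. by rewrite !addr0 scalerDr !scalerA mulrC. Qed.

Lemma R_linA p (A1 A2 : op) c y s :
  R p (fun t => c *: A1 t + A2 t) y s = c *: R p A1 y s + R p A2 y s.
Proof. exact: xbr_linA. Qed.

Lemma R_liny p (A : op) c y y' s :
  R p A (c *: y + y') s = c *: R p A y s + R p A y' s.
Proof. exact: (xbr_linB p p 0 A s c (fun _ => y) (fun _ => y')). Qed.

Lemma T_linA p (A1 A2 : op) c s :
  T p (fun t => c *: A1 t + A2 t) s = c *: T p A1 s + T p A2 s.
Proof. exact: xbr_linA. Qed.

Lemma R_ext p (A A' : op) y s : eqon p A A' -> size s = p -> R p A y s = R p A' y s.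
Proof. by move=> H Hs; apply: xbr_ext; rewrite ?addn0. Qed.

Lemma T_ext p (A A' : op) s : eqon p A A' -> size s = p.+1 -> T p A s = T p A' s.
Proof. by move=> H Hs; apply: xbr_ext; rewrite ?addn1. Qed.

Lemma opapp_lin p (A : op) c x x' : multilinear p.+1 A ->
  eqon p (opapp A (c *: x + x')) (fun t => c *: opapp A x t + opapp A x' t).
Proof.
move=> H t Ht; rewrite /opapp.
have H1 : (size (@nil G) + size t).+1 = p.+1 by rewrite /= Ht.
exact: (H [::] t H1 c x x').
Qed.

Lemma R_ml p : forall (A : op) y, multilinear p A -> multilinear p (R p A y).
Proof.
elim: p => [|p IH] A y HA l r Hs c x x'; first by [].
case: l Hs => [|z l] Hs.
  have Hr : size r = p by case: Hs.
  rewrite !cat0s !R_S // -sum2_lin; apply: eq_bigr => a _; apply: eq_bigr => b _.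
  congr (_ *: _); rewrite prD -R_linA; apply: R_ext => //.
  exact: opapp_lin.
have Hr : forall w, size (l ++ w :: r) = p by move=> w; rewrite size_cat /=; case: Hs => <-; rewrite addnS.
rewrite !cat_cons !R_S // -sum2_lin; apply: eq_bigr => a _; apply: eq_bigr => b _.
congr (_ *: _); apply: IH; first exact: ml_opapp.
by case: Hs.
Qed.

Lemma T_ml p : forall (A : op), multilinear p A -> multilinear p.+1 (T p A).
Proof.
elim: p => [|p IH] A HA l r Hs c x x'.
  case: l Hs => [|z l] Hs; last by case: Hs; rewrite /= addSn.
  have Hr : size r = 0%N by case: Hs.
  by rewrite !cat0s !T_S // R_liny comb1.
case: l Hs => [|z l] Hs.
  have Hr : size r = p.+1 by case: Hs.
  rewrite !cat0s !T_S // R_liny (@T_ext p (opapp A (c *: x + x')) (fun t => c *: opapp A x t + opapp A x' t)) //.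
    by rewrite T_linA comb2.
  exact: opapp_lin.
have Hr : forall w, size (l ++ w :: r) = p.+1 by move=> w; rewrite size_cat /=; case: Hs => <-; rewrite addnS.
rewrite !cat_cons !T_S //.
have Hs' : (size l + size r).+1 = p.+1 by case: Hs => <-.
rewrite (@R_ml p.+1 A z HA l r Hs') (IH (opapp A z) (ml_opapp z HA) l r _ c x x') ?comb2 //.

Qed.

Fixpoint hl (es : seq bool) (s : seq G) : Prop :=
  match es, s with
  | [::], [::] => True
  | e :: es', x :: s' => homog e x /\ hl es' s'
  | _, _ => False
  end.

Definition par (es : seq bool) := foldr addb false es.

Lemma hl_size es s : hl es s -> size es = size s.
Proof. by elim: s es => [|x s IH] [|e es] //= [_ /IH ->]. Qed.

Lemma hl_exists s : (forall z, z \in s -> exists e, homog e z) -> exists es, hl es s.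
Proof.
elim: s => [|x s IH] H; first by exists [::].
have [e He] := H x (mem_head x s).
have [|es Hes] := IH; first by move=> z Hz; apply: H; rewrite in_cons Hz orbT.
by exists (e :: es).
Qed.

Lemma hl_mem es s : hl es s -> forall z, z \in s -> exists e, homog e z.
Proof.
elim: s es => [|x s IH] [|e es] //= [Hx Hs] z; rewrite in_cons => /orP [/eqP -> | Hz].
  by exists e.
exact: IH Hs z Hz.
Qed.

Lemma hl_cat es1 s1 es2 s2 : hl es1 s1 -> hl es2 s2 -> hl (es1 ++ es2) (s1 ++ s2).
Proof. by elim: s1 es1 => [|x s1 IH] [|e es1] //= [Hx H1] H2; split => //; apply: IH. Qed.

Lemma homog_pr a (x : G) : homog a (pr a x).
Proof. by rewrite /homog pr_pr eqxx. Qed.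

Lemma ml_split k (F : op) x t : multilinear k.+1 F -> size t = k ->
  F (x :: t) = F (pr false x :: t) + F (pr true x :: t).
Proof.
move=> H Ht; have := @opapp_lin k F 1 (pr false x) (pr true x) H t Ht.
by rewrite /opapp !scale1r prS.
Qed.

Lemma ml_hom_ext k : forall (F F' : op), multilinear k F -> multilinear k F' ->
  (forall t es, size t = k -> hl es t -> F t = F' t) -> eqon k F F'.
Proof.
elim: k => [|k IH] F F' HF HF' H.
  by case=> // _; apply: (H [::] [::]).
case=> [|x t] // [Ht].
rewrite (ml_split x HF Ht) (ml_split x HF' Ht).
have E : forall a, F (pr a x :: t) = F' (pr a x :: t).
  move=> a; apply: (IH (opapp F (pr a x)) (opapp F' (pr a x))) => //;
    try exact: ml_opapp.
  move=> t' es Ht' Hes; apply: (H _ (a :: es)); first by rewrite /= Ht'.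
  by split => //; exact: homog_pr.
by rewrite !E.
Qed.

Lemma R_y0 p (A : op) s : R p A 0 s = 0.
Proof. exact: (lin_zero (xbr_linB p p 0 A s)). Qed.

Lemma R_A0 p (A : op) y s : multilinear p.+1 A -> size s = p -> R p (opapp A 0) y s = 0.
Proof.
move=> HA Hs; rewrite (@R_ext p _ (fun _ => 0)) //.
  exact: (lin_zero (xbr_linA p p 0 (fun _ => y) s)).
move=> t Ht; rewrite /opapp; apply: (@ml_zero p.+1 A [::] t) => //.
by rewrite /= Ht.
Qed.

Lemma homog_f (x : G) : homog true x -> pr false x = 0.
Proof. exact: (@homog_other true x). Qed.
Lemma homog_t (x : G) : homog false x -> pr true x = 0.
Proof. exact: (@homog_other false x). Qed.

Lemma Rhom p : forall (A : op) es s y e, multilinear p A -> size s = p -> hl es s ->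
  homog e y -> R p A y s = (-1) ^+ (e && par es) *: br (A s) y.
Proof.
elim: p => [|p IH] A es s y e HA Hs Hh Hy.
  case: s Hs Hh => // _; case: es => // _.
  by rewrite /= andbF expr0 scale1r.
case: s Hs Hh => [|x s] // [Hs]; case: es => [|ex es] // [Hx Hh].
rewrite R_S // !sum_bool.
have IH' := IH (opapp A x) es s y e (ml_opapp x HA) Hs Hh Hy.
case: ex Hx => Hx; case: e Hy IH' => Hy IH'.
- rewrite (homog_f Hx) (homog_f Hy) Hx Hy !R_A0 ?R_y0 // !scaler0 ?add0r ?addr0 IH'.
  by rewrite scalerA -signr_addb.
- rewrite (homog_f Hx) (homog_t Hy) Hx Hy !R_A0 ?R_y0 // !scaler0 ?add0r ?addr0 IH'.
  by rewrite scalerA -signr_addb.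
- rewrite (homog_t Hx) (homog_f Hy) Hx Hy !R_A0 ?R_y0 // !scaler0 ?add0r ?addr0 IH'.
  by rewrite scalerA -signr_addb.
- rewrite (homog_t Hx) (homog_t Hy) Hx Hy !R_A0 ?R_y0 // !scaler0 ?add0r ?addr0 IH'.
  by rewrite scalerA -signr_addb.
Qed.

Lemma br0l (v : G) : br 0 v = 0.
Proof.
case: Hbr => H1 _ _ _ _; have := H1 1 0 0 v; rewrite scaler0 addr0 scale1r => E.
by apply: (addrI (br 0 v)); rewrite addr0 -{1}E.
Qed.

Lemma br_scalel c (u v : G) : br (c *: u) v = c *: br u v.
Proof.
case: Hbr => H1 _ _ _ _; have := H1 c u 0 v; rewrite addr0 => ->.
by rewrite br0l addr0.
Qed.

Lemma ml_scale k c (F : op) : multilinear k F -> multilinear k (fun t => c *: F t).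
Proof. by move=> H l r Hs d x y; rewrite H // scalerDr !scalerA mulrC. Qed.

Lemma sym_opapp p (A : op) z e : sym p.+1 A -> homog e z -> sym p (opapp A z).
Proof.
move=> [HA HS] Hz; split; first exact: ml_opapp.
move=> l r x y a b Hs Hl Hx Hy; rewrite /opapp -!cat_cons; apply: HS => //.
  by rewrite /= -Hs.
move=> w; rewrite cat_cons in_cons => /orP [/eqP -> | Hw]; first by exists e.
exact: Hl.
Qed.

Lemma par_swap e1 a b e2 : par (e1 ++ a :: b :: e2) = par (e1 ++ b :: a :: e2).
Proof. by elim: e1 => [|e e1 IH] /=; [rewrite addbCA | rewrite IH]. Qed.

Lemma comb3 k s m sg (W V : G) :
  k *: (s *: (sg *: W) + m *: (sg *: V)) = sg *: (k *: (s *: W + m *: V)).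
Proof.
by rewrite !scalerDr !scalerA; congr (_ + _); congr (_ *: _); ring.
Qed.

Lemma comb4 (k sg s1 s2 s3 s4 : K) (U V M : G) : s1 = sg * s4 -> s2 = sg * s3 ->
  k *: (s1 *: U + (s2 *: V + sg *: M)) = (sg * k) *: (s3 *: V + (s4 *: U + M)).
Proof.
move=> -> ->; rewrite !scalerDr !scalerA [LHS]addrCA.
by congr (_ + (_ + _)); congr (_ *: _); ring.
Qed.

Lemma T_sym p : forall (A : op), sym p A -> sym p.+1 (T p A).
Proof.
elim: p => [|p IH] A [HA HsA]; split; try exact: T_ml.
  by move=> l r x y a b /eqP.
move=> l r x y a b Hs Hl Hx Hy.
have [er Her] : exists er, hl er r.
  by apply: hl_exists => w Hw; apply: Hl; rewrite mem_cat Hw orbT.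
have [el Hel] : exists el, hl el l.
  by apply: hl_exists => w Hw; apply: Hl; rewrite mem_cat Hw.
have Hrs := hl_size Her.
case: l Hs Hl Hel => [|z l] Hs Hl Hel.
  have Hr : size r = p by case: Hs.
  rewrite !cat0s.
  have Hyr : size (y :: r) = p.+1 by rewrite /= Hr.
  have Hxr : size (x :: r) = p.+1 by rewrite /= Hr.
  rewrite (T_S _ HA Hyr) (T_S _ HA Hxr) /=.
  rewrite (T_S _ (ml_opapp x HA) Hr) (T_S _ (ml_opapp y HA) Hr).
  rewrite (@Rhom p.+1 A (b :: er) (y :: r) x a HA Hyr) //.
  rewrite (@Rhom p.+1 A (a :: er) (x :: r) y b HA Hxr) //.
  rewrite (@Rhom p (opapp A x) er r y b (ml_opapp x HA) Hr) //.
  rewrite (@Rhom p (opapp A y) er r x a (ml_opapp y HA) Hr) //.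
  have HM : (if p is p'.+1 then p%:R *: T p' (opapp (opapp A x) y) r else 0) =
     (-1) ^+ (a && b) *: (if p is p'.+1 then p%:R *: T p' (opapp (opapp A y) x) r else 0).
    clear Hs Hl; case: p IH HA HsA Hr Hyr Hxr => [|p] IH HA HsA Hr Hyr Hxr; first by rewrite scaler0.
    rewrite (@T_ext p _ (fun t => (-1) ^+ (a && b) *: opapp (opapp A y) x t)) //.
      rewrite /T (@lin_scale (fun B => xbr br p.+1 p 1 B idop r)); last exact: xbr_linA.
      by rewrite !scalerA mulrC.
    apply: ml_hom_ext; first by do 2 apply: ml_opapp.
      by apply: ml_scale; do 2 apply: ml_opapp.
    move=> t es Ht Hes; rewrite /opapp.
    have := HsA [::] t x y a b; rewrite !cat0s; apply => //; first by rewrite /= Ht.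
    exact: hl_mem Hes.
  rewrite HM !scalerA mulfV ?natn0 // !scale1r.
  change (opapp A x r) with (A (x :: r)); change (opapp A y r) with (A (y :: r)).
  by apply: comb4; rewrite /= -signr_addb; congr (_ ^+ _); by case: (a); case: (b); case: (par er).
case: el Hel => [|ez el] // [Hz Hel].
have Hsl : (size l + size r).+2 = p.+1 by case: Hs => <-.
have Hrest : forall u v, size (l ++ u :: v :: r) = p.+1.
  by move=> u v; rewrite size_cat /= !addnS; case: Hs => <-.
have Hl' : forall w, w \in l ++ r -> exists e, homog e w.
  by move=> w Hw; apply: Hl; rewrite cat_cons in_cons Hw orbT.
rewrite !cat_cons (T_S _ HA (Hrest x y)) (T_S _ HA (Hrest y x)).
have IHz := (IH _ (sym_opapp (conj HA HsA) Hz)).2 l r x y a b Hsl Hl' Hx Hy.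
rewrite IHz.
rewrite (@Rhom p.+1 A (el ++ a :: b :: er) (l ++ x :: y :: r) z ez HA (Hrest x y)) //;
  last by apply: hl_cat.
rewrite (@Rhom p.+1 A (el ++ b :: a :: er) (l ++ y :: x :: r) z ez HA (Hrest y x)) //;
  last by apply: hl_cat.
rewrite (HsA l r x y a b Hsl Hl' Hx Hy) br_scalel par_swap.
exact: comb3.
Qed.

Lemma inS_step (F : nat -> op) : inS F -> inS (bracket1 br F).
Proof.
case=> N [ord [B [HB HF]]].
exists N, (fun i => (ord i).+1), (fun i => T (ord i) (B i)); split.
  by move=> i; exact: T_sym.
case=> [|m] l Hl.
  by rewrite /bracket1 big_pred0.
rewrite /bracket1 /bracket addn1 -/(T m (F m) l).
rewrite (@T_ext m _ (fun t => \sum_(i < N | ord i == m) B i t)) //; last first.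
  by move=> t Ht; apply: HF.
rewrite /T (@lin_sum (fun A => xbr br m.+1 m 1 A idop l)); last exact: xbr_linA.
by apply: eq_big => // i /eqP ->.
Qed.

End Work.

Theorem proposition4p4 (K : fieldType) (G0 G1 : lmodType K)
    (br : (G0 * G1)%type -> (G0 * G1)%type -> (G0 * G1)%type) :
  [pchar K] =i pred0 ->
  lie_superalgebra br ->
  forall A : nat -> op G0 G1, inS A ->
  forall k : nat, (1 <= k)%N -> inS (bracketk br k A).
Proof.
move=> Hch Hbr A HA k _; elim: k => [|k IH] //=.
exact: inS_step.
Qed.
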